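(* $z^\star_{\omega,\tau}(t)\ge\frac{\tau}{L_\omega}\mathbf{1}$ (componentwise) for almost every $t\in\Omega$.
   Context: Let $\Omega=(t_0,t_E)$ bounded, $t_1,\dots,t_M\in[t_0,t_E]$; $\mathcal{X}=(H^1(\Omega))^{n_y}\times(L^2(\Omega))^{n_z}$, $x=(y,z)$. For $f:\mathbb{R}^{n_y}\times\mathbb{R}^{n_y}\times\mathbb{R}^{n_z}\times\Omega\to\mathbb{R}$, $c$ (values in $\mathbb{R}^{n_c}$), $b:(\mathbb{R}^{n_y})^M\to\mathbb{R}^{n_b}$: $F(x)=\int_\Omega f(\dot y,y,z,t)dt$, $r(x)=\int_\Omega\|c(\dot y,y,z,t)\|_2^2dt+\|b(y(t_1),\dots,y(t_M))\|_2^2$, $\Gamma(x)=-\sum_{j=1}^{n_z}\int_\Omega\log z_j(t)dt$. For $\omega\in(0,1)$, $\tau\in(0,\omega]$: $F_{\omega,\tau}=F+\frac1{2\omega}r+\tau\Gamma$, and $x^\star_{\omega,\tau}=(y^\star_{\omega,\tau},z^\star_{\omega,\tau})$ is a minimizer of $F_{\omega,\tau}$ over $\mathcal{X}$. Assumptions: (A.2) $\|c(\dot y(t),y(t),z(t),t)\|_1$ and $\|b(\dots)\|_1$ bounded for all $x$ with $z\ge0$, $t\in\Omega$; $F$ bounded below on $\{z\ge0\}$. (A.3) $f,c,b$ globally Lipschitz in all arguments except $t$. $L_F,L_r\ge2$ bound the Lipschitz constants of $F,r$ (w.r.t. $\|x\|_{\mathcal{X}}$ and $\|z\|_{L^1(\Omega)}$),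 $L_f,L_c$ are the Lipschitz constants of $f,c$, $|c|_{max}$ bounds $\|c\|_1$, and $L_\omega=\max\{L_F+\frac{L_r}{2\omega},L_f+\frac{L_c}{2\omega}|c|_{max}\}$. *)

(* Defs.v *)
From HB Require Import structures.
From mathcomp Require Import all_boot all_order all_algebra.
From mathcomp Require Import all_classical all_reals all_analysis.
Set Implicit Arguments. Unset Strict Implicit. Unset Printing Implicit Defensive.
Import Order.TTheory GRing.Theory Num.Theory.
Import numFieldNormedType.Exports.
Local Open Scope classical_set_scope.
Local Open Scope ring_scope.

Section Defs.
Variable R : realType.
Local Notation mu := (@lebesgue_measure R).

Definition Omega (t0 tE : R) : set R := `]t0, tE[.

Definition norm1 n (a : 'I_n -> R) : R := \sum_(i < n) `|a i|.
Definition sqnorm2 n (a : 'I_n -> R) : R := \sum_(i < n) a i ^+ 2.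

Definition L2fun (D : set R) (g : R -> R) : Prop :=
  measurable_fun D g /\ (\int[mu]_(t in D) ((g t) ^+ 2)%:E < +oo)%E.

(* x = (y, z) in X = (H^1(Omega))^ny x (L^2(Omega))^nz ; y is the (absolutely
   continuous) representative of an H^1 function, v is its weak derivative *)
Definition inX (t0 tE : R) ny nz (y v : R -> 'I_ny -> R) (z : R -> 'I_nz -> R)
  : Prop :=
  (forall i : 'I_ny,
     [/\ L2fun (Omega t0 tE) (fun t => y t i),
         L2fun (Omega t0 tE) (fun t => v t i) &
         forall t, t0 <= t <= tE ->
           y t i = y t0 i + \int[mu]_(s in `[t0, t]) v s i]) /\
  (forall j : 'I_nz, L2fun (Omega t0 tE) (fun t => z t j)).

Definition z_nonneg (t0 tE : R) nz (z : R -> 'I_nz -> R) : Prop :=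
  forall j : 'I_nz, \forall t \ae mu, Omega t0 tE t -> 0 <= z t j.

Definition normX (t0 tE : R) ny nz (y v : R -> 'I_ny -> R) (z : R -> 'I_nz -> R)
  : R :=
  Num.sqrt (\sum_(i < ny) (\int[mu]_(t in Omega t0 tE) (y t i ^+ 2)
                           + \int[mu]_(t in Omega t0 tE) (v t i ^+ 2))
            + \sum_(j < nz) \int[mu]_(t in Omega t0 tE) (z t j ^+ 2)).

Definition normL1 (t0 tE : R) nz (z : R -> 'I_nz -> R) : R :=
  \int[mu]_(t in Omega t0 tE) norm1 (z t).

Definition Fobj (t0 tE : R) ny nz
  (f : ('I_ny -> R) -> ('I_ny -> R) -> ('I_nz -> R) -> R -> R)
  (y v : R -> 'I_ny -> R) (z : R -> 'I_nz -> R) : R :=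
  \int[mu]_(t in Omega t0 tE) f (v t) (y t) (z t) t.

Definition robj (t0 tE : R) ny nz nc nb M (tk : 'I_M -> R)
  (c : ('I_ny -> R) -> ('I_ny -> R) -> ('I_nz -> R) -> R -> 'I_nc -> R)
  (b : ('I_M -> 'I_ny -> R) -> 'I_nb -> R)
  (y v : R -> 'I_ny -> R) (z : R -> 'I_nz -> R) : R :=
  \int[mu]_(t in Omega t0 tE) sqnorm2 (c (v t) (y t) (z t) t)
  + sqnorm2 (b (fun k => y (tk k))).

Definition Gamma (t0 tE : R) nz (z : R -> 'I_nz -> R) : \bar R :=
  if `[< forall j : 'I_nz, \forall t \ae mu, Omega t0 tE t -> 0 < z t j >]
  then (- \sum_(j < nz) \int[mu]_(t in Omega t0 tE) (ln (z t j))%:E)%E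
  else +oo%E.

Definition Fomtau (t0 tE : R) ny nz nc nb M (tk : 'I_M -> R)
  (f : ('I_ny -> R) -> ('I_ny -> R) -> ('I_nz -> R) -> R -> R)
  (c : ('I_ny -> R) -> ('I_ny -> R) -> ('I_nz -> R) -> R -> 'I_nc -> R)
  (b : ('I_M -> 'I_ny -> R) -> 'I_nb -> R) (omega tau : R)
  (y v : R -> 'I_ny -> R) (z : R -> 'I_nz -> R) : \bar R :=
  ((Fobj t0 tE f y v z)%:E
   + (robj t0 tE tk c b y v z / (2 * omega))%:E
   + tau%:E * Gamma t0 tE z)%E.

End Defs.

(* Main.v *)
Require Import Defs.
From HB Require Import structures.
From mathcomp Require Import all_boot all_order all_algebra.
From mathcomp Require Import all_classical all_reals all_analysis.
From mathcomp Require Import measurable_realfun.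
From mathcomp Require Import ring lra.
Import Order.TTheory GRing.Theory Num.Theory.
Import numFieldNormedType.Exports.
Local Open Scope classical_set_scope.
Local Open Scope ring_scope.

Definition aeF (R : realType) : Filter (nbhs (almost_everywhere (@lebesgue_measure R))) :=
  @ae_filter_ringOfSetsType _ (measurableTypeR R) R _.
Global Hint Resolve aeF : typeclass_instances.

Section Helpers.
Variable R : realType.
Local Notation mu := (@lebesgue_measure R).
Variables t0 tE : R.
Local Notation D := (Omega t0 tE).

Lemma mOm : measurable (D : set (measurableTypeR R)).
Proof. exact: measurable_itv. Qed.

Lemma muOm_fin : (mu D < +oo)%E.
Proof.
rewrite /Omega lebesgue_measure_itv /=.
by case: ifP => _; rewrite ?ltry.
Qed.

Lemma int_cst k : mu.-integrable D (fun _ => k%:E).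
Proof.
apply/integrableP; split; first exact: measurable_cst.
rewrite (_ : (fun x => `|k%:E|)%E = cst `|k|%:E); last by [].
rewrite integral_cst; last exact: mOm.
by rewrite lte_mul_pinfty// ?lee_fin// muOm_fin.
Qed.

Lemma L2_int g : L2fun D g -> mu.-integrable D (EFin \o g).
Proof.
move=> [mg ig].
have ig2 : mu.-integrable D (fun x => (g x ^+ 2)%:E).
  apply/integrableP; split.
    by apply/measurable_EFinP; exact: measurable_funX.
  by under eq_integral do rewrite /= ger0_norm ?sqr_ge0//.
apply: (@le_integrable _ _ _ mu D mOm (EFin \o g) (fun x => (1%:E + (g x ^+ 2)%:E)%E)).
- exact/measurable_EFinP.
- move=> x _ /=; rewrite !lee_fin [X in _ <= X]ger0_norm; last first.
    by rewrite addr_ge0 ?sqr_ge0.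
  rewrite -real_normK ?num_real//.
  have := normr_ge0 (g x); nra.
- exact: (integrableD mOm (int_cst 1) ig2).
Qed.

Lemma ln_le_sqr (x : R) : ln x <= x ^+ 2.
Proof.
have [x1|x1] := leP 1 x; last by rewrite (le_trans (ln_le0 (ltW x1))) ?sqr_ge0.
apply: le_trans (ltW (ln_sublinear (lt_le_trans ltr01 x1))) _.
by rewrite expr2 ler_peMl// (le_trans ler01).
Qed.

Lemma ln_int_lt g : L2fun D g ->
  (\int[mu]_(t in D) (ln (g t))%:E < +oo)%E.
Proof.
move=> [mg ig].
have mg' : measurable_fun (D : set (measurableTypeR R)) g := mg.
have mf : measurable_fun (D : set (measurableTypeR R)) (fun t => (ln (g t))%:E).
  by apply/measurable_EFinP; apply: measurableT_comp.
rewrite integralE.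
apply: le_lt_trans (leeB (lexx _) (integral_ge0 _ _)) _.
  by move=> x _; exact: funeneg_ge0.
rewrite sube0; apply: le_lt_trans ig.
apply: ge0_le_integral; first exact: mOm.
- by move=> x _; exact: funepos_ge0.
- exact: measurable_funepos.
- by apply/measurable_EFinP; exact: measurable_funX.
- move=> x _; rewrite funeposE ge_max !lee_fin ln_le_sqr sqr_ge0 //.
Qed.

Lemma ln_integrable g : L2fun D g ->
  (\int[mu]_(t in D) (ln (g t))%:E)%E \is a fin_num ->
  mu.-integrable D (EFin \o (fun t => ln (g t))).
Proof.
move=> [mg ig] fin.
have mg' : measurable_fun (D : set (measurableTypeR R)) g := mg.
have mf : measurable_fun (D : set (measurableTypeR R)) (fun t => ln (g t)).
  by apply: measurableT_comp.
apply/integrableP; split; first exact/measurable_EFinP.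
by rewrite (integral_fin_num_abs _ mOm mf).
Qed.

Definition hfun (a z : R) := ln (Num.max z a) - ln z - (Num.max z a - z) / a.

Lemma hfun_gt0 a z : 0 < a -> 0 < z -> z < a -> 0 < hfun a z.
Proof.
move=> a0 z0 za; rewrite /hfun max_r ?(ltW za)//.
set u := ln z - ln a.
have eu : expR u = z / a by rewrite /u expRB !lnK ?posrE.
have u0 : u != 0.
  rewrite /u subr_eq0; apply/negP => /eqP/ln_inj.
  by rewrite !posrE => /(_ z0 a0) zE; move: za; rewrite zE ltxx.
have := expR_gt1Dx u0; rewrite eu.
have -> : ln a - ln z - (a - z) / a = - u - 1 + z / a.
  by rewrite /u mulrBl divff ?gt_eqF//; ring.
move=> H; lra.
Qed.

Lemma hfun_ge0 a z : 0 < a -> 0 < z -> 0 <= hfun a z.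
Proof.
move=> a0 z0; have [za|za] := leP a z; last exact/ltW/hfun_gt0.
by rewrite /hfun max_l// !subrr mul0r subr0.
Qed.

Lemma ae_from_int (z : R -> R) (a : R) : 0 < a ->
  (\forall t \ae mu, D t -> 0 < z t) ->
  mu.-integrable D (EFin \o (fun t => hfun a (z t))) ->
  \int[mu]_(t in D) hfun a (z t) <= 0 ->
  \forall t \ae mu, D t -> a <= z t.
Proof.
move=> a0 zpos hint hle.
set hf := fun t => hfun a (z t).
set hp := fun t => Num.max (hf t) 0.
have mhf : measurable_fun (D : set (measurableTypeR R)) hf.
  by apply/measurable_EFinP; exact: (measurable_int mu hint).
have mhp : measurable_fun (D : set (measurableTypeR R)) hp.
  by apply: measurable_maxr => //; exact: measurable_cst.
have aeq : ae_eq mu D (EFin \o hf) (EFin \o hp).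
  move: zpos; apply: filterS => t H Dt; rewrite /= /hp max_l//.
  exact: hfun_ge0 (H Dt).
have e1 : (\int[mu]_(t in D) (hp t)%:E = \int[mu]_(t in D) (hf t)%:E)%E.
  apply/esym.
  have := @ae_eq_integral _ _ _ mu D (EFin \o hp) (EFin \o hf) mOm.
  by apply; [exact/measurable_EFinP|exact/measurable_EFinP|exact: aeq].
have fin := integrable_fin_num mOm hint.
have e2 : (\int[mu]_(t in D) (hp t)%:E = 0)%E.
  apply/eqP; rewrite eq_le; apply/andP; split; last first.
    by apply: integral_ge0 => t _; rewrite lee_fin /hp le_max lexx orbT.
  rewrite e1 -(fineK fin) lee_fin; exact: hle.
have : ae_eq mu D (EFin \o hp) (cst 0%E).
  apply/ae_eq_integral_abs; first exact: mOm.
    exact/measurable_EFinP.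
  rewrite -e2; apply: eq_integral => t _.
  by rewrite /= ger0_norm// /hp le_max lexx orbT.
move=> H0; move: zpos H0; apply: filterS2 => t P1 P2 Dt.
have zt := P1 Dt; have := P2 Dt; rewrite /= /hp => /eqP; rewrite eqe => /eqP.
move=> hpe; rewrite leNgt; apply/negP => zta.
have hg := @hfun_gt0 a (z t) a0 zt zta.
move: hpe; rewrite /hf max_l; last exact: ltW.
by move=> h0; move: hg; rewrite h0 ltxx.
Qed.

Lemma L2max g a : L2fun D g -> L2fun D (fun t => Num.max (g t) a).
Proof.
move=> [mg ig].
have mg' : measurable_fun (D : set (measurableTypeR R)) g := mg.
have mm : measurable_fun (D : set (measurableTypeR R)) (fun t => Num.max (g t) a).
  by apply: measurable_maxr => //; exact: measurable_cst.
split; first exact: mm.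
apply: (@le_lt_trans _ _ (\int[mu]_(t in D) ((g t ^+ 2)%:E + (a ^+ 2)%:E))%E).
  apply: ge0_le_integral; first exact: mOm.
  - by move=> x _; rewrite lee_fin sqr_ge0.
  - by apply/measurable_EFinP; exact: measurable_funX.
  - by apply/measurable_EFinP; apply: measurable_funD => //;
      exact: measurable_funX.
  - move=> x _; rewrite -EFinD lee_fin.
    have [h|h] := leP (g x) a; first by rewrite lerDr sqr_ge0.
    by rewrite lerDl sqr_ge0.
rewrite ge0_integralD; first last.
- exact: measurable_cst.
- by move=> x _; rewrite lee_fin sqr_ge0.
- by apply/measurable_EFinP; exact: measurable_funX.
- by move=> x _; rewrite lee_fin sqr_ge0.
- exact: mOm.
apply: lte_add_pinfty => //.
rewrite integral_cst; last exact: mOm.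
by rewrite lte_mul_pinfty// ?lee_fin ?sqr_ge0// muOm_fin.
Qed.

Lemma ell_bound (a z : R) :
  `|ln (Num.max z a) - ln z| <= `|ln a| + `|ln z|.
Proof.
have [h|h] := leP z a; last by rewrite subrr normr0 addr_ge0.
exact: ler_normB.
Qed.

End Helpers.

Theorem mainTheorem14 (R : realType) (ny nz nc nb M : nat)
  (t0 tE : R) (tk : 'I_M -> R)
  (f : ('I_ny -> R) -> ('I_ny -> R) -> ('I_nz -> R) -> R -> R)
  (c : ('I_ny -> R) -> ('I_ny -> R) -> ('I_nz -> R) -> R -> 'I_nc -> R)
  (b : ('I_M -> 'I_ny -> R) -> 'I_nb -> R)
  (omega tau LF Lr Lf Lc cmax : R)
  (ys vs : R -> 'I_ny -> R) (zs : R -> 'I_nz -> R) :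
  (* setting *)
  t0 < tE ->
  (forall k, t0 <= tk k <= tE) ->
  0 < omega < 1 -> 0 < tau <= omega ->
  (* well-definedness of F and r on X (implicit in the paper) *)
  (forall y v z, inX t0 tE y v z ->
     (@lebesgue_measure R).-integrable (Omega t0 tE)
       (fun t => (f (v t) (y t) (z t) t)%:E)) ->
  (forall y v z, inX t0 tE y v z -> forall i,
     measurable_fun (Omega t0 tE) (fun t => c (v t) (y t) (z t) t i)) ->
  (* (A.2) *)
  (forall a a' w t, (forall j, 0 <= w j) -> Omega t0 tE t ->
     norm1 (c a a' w t) <= cmax) ->
  (exists Bb, forall p, norm1 (b p) <= Bb) ->
  (exists m, forall y v z, inX t0 tE y v z -> z_nonneg t0 tE z ->
     m <= Fobj t0 tE f y v z) ->
  (* (A.3) with constants L_f, L_c *)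
  (forall a1 a2 a1' a2' w w' t, Omega t0 tE t ->
     `|f a1 a2 w t - f a1' a2' w' t|
       <= Lf * (norm1 (a1 - a1') + norm1 (a2 - a2') + norm1 (w - w'))) ->
  (forall a1 a2 a1' a2' w w' t, Omega t0 tE t ->
     norm1 (c a1 a2 w t - c a1' a2' w' t)
       <= Lc * (norm1 (a1 - a1') + norm1 (a2 - a2') + norm1 (w - w'))) ->
  (exists Lb, forall p p',
     norm1 (b p - b p') <= Lb * \sum_(k < M) norm1 (p k - p' k)) ->
  (* L_F, L_r >= 2 bound the Lipschitz constants of F, r *)
  2 <= LF -> 2 <= Lr ->
  (forall y v z y' v' z', inX t0 tE y v z -> inX t0 tE y' v' z' ->
     z_nonneg t0 tE z -> z_nonneg t0 tE z' ->
     `|Fobj t0 tE f y v z - Fobj t0 tE f y' v' z'|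
       <= LF * normX t0 tE (y - y') (v - v') (z - z') /\
     `|robj t0 tE tk c b y v z - robj t0 tE tk c b y' v' z'|
       <= Lr * normX t0 tE (y - y') (v - v') (z - z')) ->
  (forall y v z z', inX t0 tE y v z -> inX t0 tE y v z' ->
     z_nonneg t0 tE z -> z_nonneg t0 tE z' ->
     `|Fobj t0 tE f y v z - Fobj t0 tE f y v z'|
       <= LF * normL1 t0 tE (z - z') /\
     `|robj t0 tE tk c b y v z - robj t0 tE tk c b y v z'|
       <= Lr * normL1 t0 tE (z - z')) ->
  (* x^star = (y^star, z^star) minimizes F_{omega,tau} over X *)
  inX t0 tE ys vs zs ->
  (forall y v z, inX t0 tE y v z ->
     (Fomtau t0 tE tk f c b omega tau ys vs zs
        <= Fomtau t0 tE tk f c b omega tau y v z)%E) ->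
  (* conclusion *)
  let Lomega := Num.max (LF + Lr / (2 * omega))
                        (Lf + Lc / (2 * omega) * cmax) in
  \forall t \ae (@lebesgue_measure R),
    Omega t0 tE t -> forall j : 'I_nz, tau / Lomega <= zs t j.
Proof.
move=> t0E tkH /andP[om0 om1] /andP[tau0 tauom] Fint cmeas cbound bbound
  Fbelow fLip cLip bLip LF2 Lr2 LipX LipL1 inXs minH Lomega.
set L1 := LF + Lr / (2 * omega).
have L10 : 0 < L1 by rewrite /L1 ltr_wpDr ?divr_ge0 ?mulr_ge0 ?(ltW om0) ?(le_trans _ Lr2)// (lt_le_trans _ LF2).
set a := tau / L1.
have a0 : 0 < a by rewrite divr_gt0.
have aL : tau / Lomega <= a.
  rewrite /a ler_pM2l// lef_pV2 ?posrE ?(lt_le_trans L10) ?le_max ?lexx//.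
suff H : forall j, \forall t \ae (@lebesgue_measure R), Omega t0 tE t -> a <= zs t j.
  have := @filter_forall _ _ (fun j t => Omega t0 tE t -> a <= zs t j) _ (aeF R) H.
  apply: filterS => t Ht Dt j; exact: le_trans aL (Ht j Dt).
have mOm := @mOm R t0 tE.
case: (inXs) => Hy Hz.
pose z1 := fun (_ : R) (_ : 'I_nz) => (1 : R).
have inX1 : inX t0 tE ys vs z1.
  split=> // j; split; first exact: measurable_cst.
  rewrite (_ : (fun t => ((z1 t j) ^+ 2)%:E) = cst 1%E); last first.
    by apply: funext => t; rewrite /z1 expr1n.
  by rewrite integral_cst// mul1e muOm_fin.
have G1 : Gamma t0 tE z1 = 0%E.
  rewrite /Gamma asboolT; last by move=> j; apply: aeW => t _; exact: ltr01.
  rewrite big1 ?oppe0// => j _.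
  under eq_integral do rewrite /z1 ln1.
  exact: integral0.
have GnI : Gamma t0 tE zs != +oo%E.
  apply/eqP => Gy; have := minH _ _ _ inX1.
  by rewrite /Fomtau G1 mule0 adde0 Gy gt0_muley ?lte_fin// addey.
have [Hpos GE] : (forall j, \forall t \ae (@lebesgue_measure R),
      Omega t0 tE t -> 0 < zs t j) /\
    Gamma t0 tE zs = (- \sum_(j < nz) \int[@lebesgue_measure R]_(t in Omega t0 tE)
       (ln (zs t j))%:E)%E.
  by move: GnI; rewrite /Gamma; case: asboolP.
have Ifin : forall j, (\int[@lebesgue_measure R]_(t in Omega t0 tE)
       (ln (zs t j))%:E)%E \is a fin_num.
  move=> j; rewrite fin_numE; apply/andP; split; last first.
    by rewrite lt_eqF// ln_int_lt.
  apply/eqP => Hm; move: GnI; rewrite GE (bigD1 j)//= Hm addNye.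
  by [].
have Iint : forall j, (@lebesgue_measure R).-integrable (Omega t0 tE)
    (EFin \o (fun t => ln (zs t j))).
  by move=> j; exact: ln_integrable (Hz j) (Ifin j).
move=> j0.
pose zp := fun t (j : 'I_nz) => if j == j0 then Num.max (zs t j) a else zs t j.
have zpE : forall j, j != j0 -> (fun t => zp t j) = (fun t => zs t j).
  by move=> j jn; apply: funext => t; rewrite /zp (negbTE jn).
have zpE0 : (fun t => zp t j0) = (fun t => Num.max (zs t j0) a).
  by apply: funext => t; rewrite /zp eqxx.
have inXp : inX t0 tE ys vs zp.
  split=> // j; have [->|jn] := eqVneq j j0.
    by rewrite zpE0; exact: L2max.
  by rewrite zpE//; exact: Hz.
have nns : z_nonneg t0 tE zs.
  by move=> j; move: (Hpos j); apply: filterS => t H Dt; exact: ltW (H Dt).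
have posp : forall j, \forall t \ae (@lebesgue_measure R),
    Omega t0 tE t -> 0 < zp t j.
  move=> j; have [->|jn] := eqVneq j j0.
    by apply: aeW => t _; rewrite /zp eqxx lt_max a0 orbT.
  by move: (Hpos j); apply: filterS => t H Dt; rewrite /zp (negbTE jn) H.
have nnp : z_nonneg t0 tE zp.
  by move=> j; move: (posp j); apply: filterS => t H Dt; exact: ltW (H Dt).
have [LF1 Lr1] := LipL1 ys vs zs zp inXs inXp nns nnp.
pose dd := fun t => Num.max (zs t j0) a - zs t j0.
have NE : normL1 t0 tE (zs - zp) = \int[@lebesgue_measure R]_(t in Omega t0 tE) dd t.
  have fE : forall t j, (zs - zp) t j = zs t j - zp t j by [].
  rewrite /normL1; apply: eq_Rintegral => t _; rewrite /norm1 (bigD1 j0)//= big1.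
    by rewrite fE addr0 /zp eqxx distrC ger0_norm// subr_ge0 le_max lexx.
  by move=> j jn; rewrite fE /zp (negbTE jn) subrr normr0.
pose mu := @lebesgue_measure R.
pose ell := fun t => ln (Num.max (zs t j0) a) - ln (zs t j0).
have ellint : mu.-integrable (Omega t0 tE) (EFin \o ell).
  apply: (le_integrable mOm _ _ (integrableD mOm (int_cst R t0 tE `|ln a|)
     (integrable_abse (Iint j0)))).
  - have mz : measurable_fun (Omega t0 tE : set (measurableTypeR R)) (fun t => zs t j0).
      exact: (Hz j0).1.
    apply/measurable_EFinP; apply: measurable_funB; apply: measurableT_comp => //.
    by apply: measurable_maxr => //; exact: measurable_cst.
  - move=> t _ /=; rewrite lee_fin [X in _ <= X]ger0_norm ?addr_ge0//; exact: ell_bound.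
pose Ir := fun j => \int[mu]_(t in Omega t0 tE) ln (zs t j).
pose Ll := \int[mu]_(t in Omega t0 tE) ell t.
have Lj : forall j, (\int[mu]_(t in Omega t0 tE) (ln (zp t j))%:E)%E =
    (Ir j + (if j == j0 then Ll else 0))%:E.
  move=> j; have [->|jn] := eqVneq j j0.
    have -> : (\int[mu]_(t in Omega t0 tE) (ln (zp t j0))%:E)%E =
        (\int[mu]_(t in Omega t0 tE) ((EFin \o (fun t => ln (zs t j0))) \+ (EFin \o ell)) t)%E.
      by apply: eq_integral => t _; rewrite /= -EFinD /ell /zp eqxx addrC subrK.
    by rewrite integralD_EFin// EFinD /Ir /Ll /Rintegral !fineK// integrable_fin_num.
  rewrite ?(negbTE jn) addr0 /Ir /Rintegral fineK//.
  by apply: eq_integral => t _; rewrite /zp (negbTE jn).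
have GEp : Gamma t0 tE zp = (- (\sum_(j < nz) Ir j + Ll))%:E.
  rewrite /Gamma asboolT//.
  rewrite (eq_bigr _ (fun j _ => Lj j)) sumEFin big_split /= -big_mkcond /=.
  by rewrite big_pred1_eq.
have GEs : Gamma t0 tE zs = (- (\sum_(j < nz) Ir j))%:E.
  rewrite GE (eq_bigr (fun j => (Ir j)%:E)) ?sumEFin// => j _.
  by rewrite /Ir /Rintegral fineK.
have mz := minH _ _ _ inXp.
rewrite /Fomtau GEs GEp -!EFinM -!EFinD lee_fin in mz.
rewrite NE in LF1 Lr1.
set N := \int[@lebesgue_measure R]_(t in Omega t0 tE) dd t in LF1 Lr1.
set k := (2 * omega)^-1 in mz.
have k0 : 0 < k by rewrite invr_gt0 mulr_gt0.
move: LF1 Lr1 => /ler_normlP[h1 _] /ler_normlP[h2 _].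
have h2' := ler_wpM2r (ltW k0) h2.
have key : tau * Ll <= L1 * N.
  rewrite /L1 -/k; nra.
have hle : Ll - N / a <= 0.
  rewrite subr_le0 /a invf_div.
  have : Ll <= L1 * N / tau by rewrite ler_pdivlMr// mulrC.
  by rewrite mulrA [N * L1]mulrC.
have ddint : mu.-integrable (Omega t0 tE) (EFin \o dd).
  have := integrableB mOm (L2_int _ _ _ _ (L2max _ _ _ _ a (Hz j0))) (L2_int _ _ _ _ (Hz j0)).
  by apply: (eq_integrable mOm) => t _; rewrite /= -EFinB.
have ddaint : mu.-integrable (Omega t0 tE) (EFin \o (fun t => dd t * a^-1)).
  have := integrableZr mOm a^-1 ddint.
  by apply: (eq_integrable mOm) => t _; rewrite /= -EFinM.
have hint : mu.-integrable (Omega t0 tE) (EFin \o (fun t => hfun R a (zs t j0))).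
  have := integrableB mOm ellint ddaint.
  by apply: (eq_integrable mOm) => t _; rewrite /= -EFinB.
apply: (ae_from_int _ _ _ (fun t => zs t j0) a a0 (Hpos j0) hint).
have -> : \int[mu]_(t in Omega t0 tE) hfun R a (zs t j0) =
    \int[mu]_(t in Omega t0 tE) (ell t - dd t * a^-1) by apply: eq_Rintegral.
by rewrite RintegralB// RintegralZr.
Qed.
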